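(* Let $\vec G$ be any orientation of the Coxeter diagram $s_1-\cdots-s_{n-1}$ of $S_n$, with up indices determined as described below. For each transposition $(m,M)$ with $1\le m<M\le n$, there is a unique join-irreducible $\gamma$ of the weak order on $S_n$ that is not contracted by $\Theta(\vec G)$ and whose associated left reflection is $(m,M)$. The subset associated to this $\gamma$ is $A=\{m\}\cup\{b\in(m,M): b \text{ up}\}\cup(M,n]$.
   Context: Weak order on $S_n$: $x\le y$ iff $I(x)\subseteq I(y)$, $I(x)=\{(x_j,x_i):i<j,x_i>x_j\}$. An element is join-irreducible if it covers exactly one element $\gamma_*$. Join-irreducibles of $S_n$ correspond bijectively to subsets $A\subseteq[n]$ with $M:=\max([n]\setminus A)>m:=\min A$: $\gamma$ lists the elements of $[n]\setminus A$ in increasing order followed by the elements of $A$ in increasing order (one-line notation); its associated left reflection is the transposition $(m,M)$ (equivalently $\gamma s\gamma^{-1}$ for its unique right descent $s$). A congruence $\Theta$ contracts $\gamma$ if $\gamma\equiv\gamma_*$. $\Theta(\vec G)$ is the smallest lattice congruence of the weak order with $t\equiv ts$ for each directed edge $s\to t$ of $\vec G$, where $s_i=(i,i+1)$. For $b\in[2,n-1]$, $b$ is up if $s_b\to s_{b-1}$ in $\vec G$ and down if $s_{b-1}\to s_b$. *)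

(* Defs.v *)
(* Permutations of [n] are {perm 'I_n}; the ordinal k : 'I_n
   represents the integer k+1 of [n] = {1,...,n}.  A permutation x is read in
   one-line notation: x_i (1-based position i) is the value x (i-1). *)
From mathcomp Require Import all_boot all_fingroup.
Set Implicit Arguments. Unset Strict Implicit. Unset Printing Implicit Defensive.
Local Open Scope group_scope.

Section WeakOrder.
Variable n : nat.

Definition inv_set (x : 'S_n) : {set 'I_n * 'I_n} :=
  [set p : 'I_n * 'I_n |
    [exists i : 'I_n, exists j : 'I_n,
      [&& (i < j)%N, (x j < x i)%N & p == (x j, x i)]]].

Definition weak_le (x y : 'S_n) : bool := inv_set x \subset inv_set y.
Definition weak_lt (x y : 'S_n) : bool := (x != y) && weak_le x y.

Definition covers (y z : 'S_n) : bool :=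
  weak_lt z y && [forall w, ~~ (weak_lt z w && weak_lt w y)].

Definition join_irr (y : 'S_n) : bool := #|[set z | covers y z]| == 1%N.

Definition is_join (x y j : 'S_n) : bool :=
  [&& weak_le x j, weak_le y j & [forall u, weak_le x u ==> weak_le y u ==> weak_le j u]].
Definition is_meet (x y m : 'S_n) : bool :=
  [&& weak_le m x, weak_le m y & [forall u, weak_le u x ==> weak_le u y ==> weak_le u m]].

Definition lattice_congruence (R : 'S_n -> 'S_n -> Prop) : Prop :=
  [/\ (forall x, R x x),
      (forall x y, R x y -> R y x),
      (forall x y z, R x y -> R y z -> R x z),
      (forall x y z jx jy, R x y -> is_join x z jx -> is_join y z jy -> R jx jy) &
      (forall x y z mx my, R x y -> is_meet x z mx -> is_meet y z my -> R mx my)].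

(* simple transposition s_i = (i, i+1), for 1 <= i <= n-1 (identity otherwise) *)
Definition sgen (i : nat) : 'S_n :=
  match (insub i.-1 : option 'I_n), (insub i : option 'I_n) with
  | Some a, Some b => tperm a b
  | _, _ => 1
  end.

(* Composition as functions: (comp f g) k = f (g k).  In MathComp,
   (g * f) k = f (g k). *)
Definition comp (f g : 'S_n) : 'S_n := g * f.

(* The orientation of the path s_1 - ... - s_{n-1} is given by
   up : nat -> bool on b in [2, n-1]:
   up b  <->  edge s_b -> s_{b-1};  ~~ up b  <->  edge s_{b-1} -> s_b.
   A directed edge s -> t yields the generating relation t == t s. *)
Definition edge_rel (up : nat -> bool) (x y : 'S_n) : Prop :=
  exists b : nat, [/\ (2 <= b)%N, (b <= n.-1)%N &
    let st := if up b then (sgen b, sgen b.-1) else (sgen b.-1, sgen b) in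
    x = st.2 /\ y = comp st.2 st.1].

Definition Theta (up : nat -> bool) (x y : 'S_n) : Prop :=
  forall R, lattice_congruence R -> (forall a b, edge_rel up a b -> R a b) -> R x y.

(* Theta contracts gamma: gamma == gamma_* (its unique lower cover) *)
Definition contracts (Th : 'S_n -> 'S_n -> Prop) (g : 'S_n) : Prop :=
  exists z, covers g z /\ Th g z.

Definition right_descent (g : 'S_n) (i : nat) : bool :=
  [&& (1 <= i)%N, (i <= n.-1)%N & weak_lt (comp g (sgen i)) g].

Definition assoc_left_reflection (g r : 'S_n) : Prop :=
  exists i, right_descent g i /\ r = comp (comp g (sgen i)) g^-1.

(* gamma lists the elements of [n] \ A increasingly, then those of A
   increasingly (one-line notation); i.e. A is the subset associated to gamma *)
Definition lists_compl_then (A : {set 'I_n}) (g : 'S_n) : Prop :=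
  (forall i : 'I_n, (g i \in A) = (#|~: A| <= i)%N) /\
  (forall i j : 'I_n, (i < j)%N -> (g i \in A) = (g j \in A) -> (g i < g j)%N).

End WeakOrder.

(* Main.v *)
Require Import Defs.
From mathcomp Require Import all_boot all_fingroup zify.
Set Implicit Arguments. Unset Strict Implicit. Unset Printing Implicit Defensive.
Local Open Scope group_scope.

Section Basics.
Variable n : nat.

Definition Tx (x : 'S_n) (v w : 'I_n) : bool := (x^-1 w < x^-1 v)%N.

Lemma mem_inv_set (x : 'S_n) (p q : 'I_n) :
  ((p, q) \in inv_set x) = (p < q)%N && Tx x p q.
Proof.
rewrite /inv_set inE /Tx; apply/existsP/andP.
- case=> i /existsP [j /and3P [ij xji /eqP [-> ->]]].
  by rewrite !permK.
- case=> pq T; exists (x^-1 q); apply/existsP; exists (x^-1 p).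
  by rewrite T !permKV pq eqxx.
Qed.

Lemma weak_leP (x y : 'S_n) :
  reflect (forall v w : 'I_n, (v < w)%N -> Tx x v w -> Tx y v w) (weak_le x y).
Proof.
apply: (iffP subsetP).
- move=> H v w vw T; have := H (v, w); rewrite !mem_inv_set vw T /=.
  by move/(_ isT).
- move=> H [p q]; rewrite !mem_inv_set => /andP [pq T].
  by rewrite pq (H _ _ pq T).
Qed.

Lemma card_ltk (k : nat) : (k <= n)%N -> #|[set i : 'I_n | (i < k)%N]| = k.
Proof.
move=> kn.
have -> : [set i : 'I_n | (i < k)%N] = [set widen_ord kn i | i in 'I_k].
  apply/setP => i; rewrite inE; apply/idP/imsetP.
  - move=> ik; exists (Ordinal ik) => //; exact: val_inj.
  - by case=> j _ ->; rewrite /= ltn_ord.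
rewrite card_imset ?card_ord //.
by move=> i j /(congr1 val) /= /val_inj.
Qed.

Lemma rank_perm (z : 'S_n) (v : 'I_n) :
  (z v : nat) = #|[set w | (z w < z v)%N]|.
Proof.
have -> : [set w | (z w < z v)%N] = z @^-1: [set i : 'I_n | (i < z v)%N].
  by apply/setP => w; rewrite !inE.
rewrite card_preimset; last exact: perm_inj.
by rewrite card_ltk // ltnW.
Qed.

Lemma Tx_all (x y : 'S_n) :
  (forall v w : 'I_n, (v < w)%N -> Tx x v w = Tx y v w) ->
  forall v w : 'I_n, Tx x v w = Tx y v w.
Proof.
move=> H v w; case: (ltngtP v w) => [vw|wv|/val_inj ->]; first exact: H.
- have := H _ _ wv; rewrite /Tx => E.
  have wv' : w != v by rewrite -val_eqE /=; lia.
  have nx : x^-1 w != x^-1 v by rewrite (inj_eq (@perm_inj _ _)).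
  have ny : y^-1 w != y^-1 v by rewrite (inj_eq (@perm_inj _ _)).
  move: nx ny E; rewrite -?val_eqE /=; lia.
- by rewrite /Tx !ltnn.
Qed.

Lemma eqTx (x y : 'S_n) :
  (forall v w : 'I_n, (v < w)%N -> Tx x v w = Tx y v w) -> x = y.
Proof.
move=> H; have H' := Tx_all H.
suff E : x^-1 = y^-1 by rewrite -(invgK x) E invgK.
apply/permP => v; apply: val_inj => /=.
rewrite (rank_perm x^-1) (rank_perm y^-1); apply: eq_card => w.
rewrite !inE; exact: H'.
Qed.

Lemma weak_le_antisym (x y : 'S_n) : weak_le x y -> weak_le y x -> x = y.
Proof.
move=> /weak_leP H1 /weak_leP H2; apply: eqTx => v w vw.
apply/idP/idP; [exact: H1| exact: H2].
Qed.

Lemma weak_le_refl (x : 'S_n) : weak_le x x.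
Proof. exact: subxx. Qed.

Lemma weak_le_trans (x y z : 'S_n) : weak_le x y -> weak_le y z -> weak_le x z.
Proof. exact: subset_trans. Qed.

Definition kk (k : 'I_n -> nat) (v : 'I_n) : nat := k v * n + v.

Lemma kk_lt (k : 'I_n -> nat) (v w : 'I_n) :
  (kk k w < kk k v)%N = (k w < k v)%N || ((k w == k v) && (w < v)%N).
Proof.
rewrite /kk; have := ltn_ord v; have := ltn_ord w.
case: (ltngtP (k w) (k v)) => H /= hw hv.
- apply/idP; have : (k w).+1 <= k v by []. nia.
- apply/negP; have : (k v).+1 <= k w by []. nia.
- by rewrite H ltn_add2l.
Qed.

Lemma kk_inj (k : 'I_n -> nat) : injective (kk k).
Proof.
move=> v w E; apply: val_inj; move: (kk_lt k v w) (kk_lt k w v); rewrite E ltnn /=.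
lia.
Qed.

Definition rkset (k : 'I_n -> nat) (v : 'I_n) := [set w | (kk k w < kk k v)%N].

Lemma rk_lt (k : 'I_n -> nat) (v : 'I_n) : (#|rkset k v| < n)%N.
Proof.
have : rkset k v \subset [set~ v].
  by apply/subsetP => w; rewrite !inE; apply: contraTN => /eqP ->; rewrite ltnn.
move/subset_leq_card; rewrite cardsC1 card_ord.
move=> h; have := ltn_ord v; lia.
Qed.

Definition rkf (k : 'I_n -> nat) (v : 'I_n) : 'I_n := Ordinal (rk_lt k v).

Lemma rkf_mono (k : 'I_n -> nat) (v w : 'I_n) :
  (kk k v < kk k w)%N -> (rkf k v < rkf k w)%N.
Proof.
move=> H; rewrite /rkf /=; apply: proper_card; apply/properP; split.
- apply/subsetP => z; rewrite !inE => h; exact: ltn_trans h H.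
- by exists v; rewrite !inE ?ltnn.
Qed.

Lemma rkf_lt (k : 'I_n -> nat) (v w : 'I_n) :
  (rkf k v < rkf k w)%N = (kk k v < kk k w)%N.
Proof.
apply/idP/idP; last exact: rkf_mono.
case: (ltngtP (kk k v) (kk k w)) => // [H|/kk_inj ->]; last by rewrite ltnn.
by move/rkf_mono: H => H1 H2; have := ltn_trans H1 H2; rewrite ltnn.
Qed.

Lemma rkf_inj (k : 'I_n -> nat) : injective (rkf k).
Proof.
move=> v w E; apply: (@kk_inj k).
case: (ltngtP (kk k v) (kk k w)) => // H.
- by have := rkf_mono H; rewrite E ltnn.
- by have := rkf_mono H; rewrite E ltnn.
Qed.

Definition kperm (k : 'I_n -> nat) : 'S_n := (perm (@rkf_inj k))^-1.

Lemma kperm_inv (k : 'I_n -> nat) (v : 'I_n) : (kperm k)^-1 v = rkf k v.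
Proof. by rewrite /kperm invgK permE. Qed.

Lemma kperm_T (k : 'I_n -> nat) (v w : 'I_n) :
  (v < w)%N -> Tx (kperm k) v w = (k w < k v)%N.
Proof.
move=> vw; rewrite /Tx !kperm_inv rkf_lt kk_lt.
have -> : (w < v)%N = false by lia.
by rewrite andbF orbF.
Qed.

End Basics.
Section Generic.
Variable n : nat.

Definition Jg (T : rel 'I_n) (u : pred 'I_n) (p q : 'I_n) : Prop :=
  forall v w : 'I_n, (p <= v)%N -> (v < w)%N -> (w <= q)%N ->
    (v == p) || u v -> (w == q) || ~~ u w -> T v w.

Lemma Jg_ext (T T' : rel 'I_n) (u u' : pred 'I_n) p q :
  (forall v w, T v w = T' v w) -> (forall r, u r = u' r) ->
  Jg T u p q <-> Jg T' u' p q.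
Proof.
move=> HT Hu; split=> J v w a b c d e.
- by rewrite -HT; apply: J; rewrite // ?Hu.
- by rewrite HT; apply: J; rewrite // -?Hu.
Qed.

Variables (T : rel 'I_n) (u : pred 'I_n).
Hypothesis Ntr : forall v r w : 'I_n, (v < r)%N -> (r < w)%N ->
  ~~ T v r -> ~~ T r w -> ~~ T v w.

Lemma JgA (p q : 'I_n) :
  Jg (fun v w => ~~ T v w) (fun r => ~~ u r) p q <->
  (forall v w : 'I_n, (p <= v)%N -> (v < w)%N -> (w <= q)%N ->
     (v == p) || ~~ u v -> (w == q) || ~~ ~~ u w -> ~ Jg T u v w).
Proof.
split.
- move=> K v w pv vw wq hv hw J.
  have := K v w pv vw wq hv hw; rewrite (J v w) ?eqxx //.
- move=> H v w pv vw wq hv hw; apply/negP => Tvw.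
  suff : forall d (v w : 'I_n), (w - v <= d)%N -> (p <= v)%N -> (v < w)%N -> (w <= q)%N ->
     (v == p) || ~~ u v -> (w == q) || ~~ ~~ u w -> T v w -> False.
    by move/(_ (w - v) v w (leqnn _) pv vw wq hv hw Tvw).
  elim=> [|d IH] {}v {}w dd {}pv {}vw {}wq {}hv {}hw {}Tvw; first by lia.
  apply: (H v w pv vw wq hv hw) => v' w' vv' vw' ww' hv' hw'.
  have F1 : forall r : 'I_n, (v < r)%N -> (r < w)%N -> u r -> ~~ T v r.
    move=> r vr rw ur; apply/negP => Tvr.
    have h1 : (r - v <= d)%N by clear -dd vr rw; lia.
    have h2 : (r <= q)%N by clear -rw wq; lia.
    by apply: (IH v r h1 pv vr h2 hv _ Tvr); rewrite ur orbT.
  have F2 : forall r : 'I_n, (v < r)%N -> (r < w)%N -> ~~ u r -> ~~ T r w.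
    move=> r vr rw ur; apply/negP => Trw.
    have h1 : (w - r <= d)%N by clear -dd vr rw; lia.
    have h2 : (p <= r)%N by clear -pv vr; lia.
    by apply: (IH r w h1 h2 rw wq _ hw Trw); rewrite ur orbT.
  have [ev|nv] := eqVneq v' v; have [ew|nw] := eqVneq w' w.
  + by rewrite ev ew.
  + subst v'; move: hw'; rewrite (negbTE nw) /= => uw'.
    apply: (contraTT _ Tvw) => h.
    have w'w : (w' < w)%N by move: nw ww'; clear; rewrite -val_eqE /=; lia.
    exact: Ntr vw' w'w h (F2 _ vw' w'w uw').
  + subst w'; move: hv'; rewrite (negbTE nv) /= => uv'.
    apply: (contraTT _ Tvw) => h.
    have vv'' : (v < v')%N by move: nv vv'; clear; rewrite -val_eqE /=; lia.
    exact: Ntr vv'' vw' (F1 _ vv'' vw' uv') h.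
  + move: hv' hw'; rewrite (negbTE nv) (negbTE nw) /= => uv' uw'.
    apply: (contraTT _ Tvw) => h.
    have vv'' : (v < v')%N by move: nv vv'; clear; rewrite -val_eqE /=; lia.
    have w'w : (w' < w)%N by move: nw ww'; clear; rewrite -val_eqE /=; lia.
    have vw'' : (v < w')%N by clear -vv'' vw'; lia.
    have h2 := Ntr vv'' vw' (F1 _ vv'' (ltn_trans vw' w'w) uv') h.
    exact: Ntr vw'' w'w h2 (F2 _ vw'' w'w uw').
Qed.

End Generic.

Ltac crush := repeat (case: ifP => //=); lia.

Ltac crush2 := repeat (match goal with |- context [if ?c then _ else _] =>
   let E := fresh "E" in case E: c => /= end); lia.

Section Camb.
Local Open Scope nat_scope.
Variable n : nat.

Definition Aset (a b : nat) (S : nat -> bool) (v : nat) : bool :=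
  (v == a) || ((a < v) && (v < b) && S v) || (b < v).
Definition k0 a b S (v : 'I_n) : nat := if Aset a b S v then 4 * (n + v) else 4 * v.
Definition gam a b S : 'S_n := kperm (k0 a b S).
Definition negS (S : nat -> bool) := fun r => ~~ S r.
Definition kap a b S : 'S_n := kperm (fun v => 8 * n - k0 a b (negS S) v).

Lemma gam_T a b S (v w : 'I_n) : (v < w)%N ->
  Tx (gam a b S) v w = Aset a b S v && ~~ Aset a b S w.
Proof.
move=> vw; rewrite kperm_T // /k0; have := ltn_ord v; have := ltn_ord w.
by case: (Aset a b S v); case: (Aset a b S w) => /=; lia.
Qed.

Lemma kap_T a b S (v w : 'I_n) : (v < w)%N ->
  Tx (kap a b S) v w = ~~ (Aset a b (negS S) v && ~~ Aset a b (negS S) w).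
Proof.
move=> vw; rewrite kperm_T // /k0; have := ltn_ord v; have := ltn_ord w.
by case: (Aset a b (negS S) v); case: (Aset a b (negS S) w) => /=; lia.
Qed.

Lemma Jg_gam (x : 'S_n) (S : nat -> bool) (p q : 'I_n) : (p < q)%N ->
  Jg (Tx x) (fun r => S r) p q <-> weak_le (gam p q S) x.
Proof.
move=> pq; split.
- move=> J; apply/weak_leP => v w vw; rewrite gam_T // /Aset => /andP [Av Aw].
  apply: J => //; move: Av Aw; rewrite -?val_eqE /=; lia.
- move/weak_leP => H v w pv vw wq hv hw; apply: H => //; rewrite gam_T // /Aset.
  move: hv hw; rewrite -?val_eqE /=; lia.
Qed.

Lemma Kg_kap (x : 'S_n) (S : nat -> bool) (p q : 'I_n) : (p < q)%N ->
  Jg (fun v w => ~~ Tx x v w) (fun r => ~~ S r) p q <-> weak_le x (kap p q S).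
Proof.
move=> pq; split.
- move=> J; apply/weak_leP => v w vw Txvw; rewrite kap_T //; apply/negP => /andP [Av Aw].
  suff : ~~ Tx x v w by rewrite Txvw.
  apply: J => //; move: Av Aw; rewrite /Aset /negS -?val_eqE /=; lia.
- move/weak_leP => H v w pv vw wq hv hw; apply/negP => Txvw.
  have := H v w vw Txvw; rewrite kap_T // /Aset /negS; move: hv hw; rewrite -?val_eqE /=; lia.
Qed.


Lemma is_join_le (x z j u : 'S_n) : is_join x z j ->
  (weak_le j u <-> weak_le x u /\ weak_le z u).
Proof.
case/and3P => xj zj /forallP H; split.
- by move=> ju; split; apply: weak_le_trans ju.
- by case=> xu zu; have := H u; rewrite xu zu.
Qed.

Lemma is_meet_le (x z m u : 'S_n) : is_meet x z m ->
  (weak_le u m <-> weak_le u x /\ weak_le u z).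
Proof.
case/and3P => mx mz /forallP H; split.
- by move=> um; split; apply: weak_le_trans um _.
- by case=> ux uz; have := H u; rewrite ux uz.
Qed.

Definition Jx (x : 'S_n) (S : nat -> bool) (p q : 'I_n) := Jg (Tx x) (fun r : 'I_n => S r) p q.
Definition Kx (x : 'S_n) (S : nat -> bool) (p q : 'I_n) :=
  Jg (fun v w => ~~ Tx x v w) (fun r : 'I_n => ~~ S r) p q.
Definition Rc (S : nat -> bool) (x y : 'S_n) : Prop :=
  forall p q : 'I_n, (p < q)%N -> (Jx x S p q <-> Jx y S p q).

Lemma Ntr_Tx (x : 'S_n) (v r w : 'I_n) : (v < r)%N -> (r < w)%N ->
  ~~ Tx x v r -> ~~ Tx x r w -> ~~ Tx x v w.
Proof. rewrite /Tx; lia. Qed.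

Lemma Ttr_Tx (x : 'S_n) (v r w : 'I_n) : (v < r)%N -> (r < w)%N ->
  ~~ ~~ Tx x v r -> ~~ ~~ Tx x r w -> ~~ ~~ Tx x v w.
Proof. rewrite /Tx; lia. Qed.

Lemma K_of_J (x : 'S_n) S (p q : 'I_n) :
  Kx x S p q <-> (forall v w : 'I_n, (p <= v)%N -> (v < w)%N -> (w <= q)%N ->
     (v == p) || ~~ S v -> (w == q) || ~~ ~~ S w -> ~ Jx x S v w).
Proof. exact: (@JgA n (Tx x) (fun r : 'I_n => S r) (@Ntr_Tx x) p q). Qed.

Lemma J_of_K (x : 'S_n) S (p q : 'I_n) :
  Jx x S p q <-> (forall v w : 'I_n, (p <= v)%N -> (v < w)%N -> (w <= q)%N ->
     (v == p) || ~~ ~~ S v -> (w == q) || ~~ ~~ ~~ S w -> ~ Kx x S v w).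
Proof.
have := @JgA n (fun v w => ~~ Tx x v w) (fun r : 'I_n => ~~ S r) (@Ttr_Tx x) p q.
move=> <-; apply: Jg_ext => *; exact/esym/negbK.
Qed.

Lemma Rc_K S (x y : 'S_n) : Rc S x y ->
  forall p q : 'I_n, (p < q)%N -> (Kx x S p q <-> Kx y S p q).
Proof.
move=> R p q pq; rewrite !K_of_J; split=> H v w pv vw wq hv hw.
- by rewrite -(R v w vw); apply: H.
- by rewrite (R v w vw); apply: H.
Qed.

Lemma K_Rc S (x y : 'S_n) :
  (forall p q : 'I_n, (p < q)%N -> (Kx x S p q <-> Kx y S p q)) -> Rc S x y.
Proof.
move=> R p q pq; rewrite !J_of_K; split=> H v w pv vw wq hv hw.
- by rewrite -(R v w vw); apply: H.
- by rewrite (R v w vw); apply: H.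
Qed.

Lemma Rc_cong S : lattice_congruence (Rc S).
Proof.
split.
- by move=> x p q.
- by move=> x y H p q pq; apply: iff_sym; apply: H.
- by move=> x y z H1 H2 p q pq; apply: iff_trans (H1 p q pq) (H2 p q pq).
- move=> x y z jx jy Hxy Jx' Jy'; apply: K_Rc => p q pq.
  rewrite /Kx !Kg_kap // (is_join_le _ Jx') (is_join_le _ Jy') -!Kg_kap //.
  by have := Rc_K Hxy pq; rewrite /Kx => ->.
- move=> x y z mx my Hxy Mx My p q pq.
  rewrite /Jx !Jg_gam // (is_meet_le _ Mx) (is_meet_le _ My) -!Jg_gam //.
  by have := Hxy p q pq; rewrite /Jx => ->.
Qed.


Lemma sgenE (i : nat) (o1 o2 : 'I_n) : (o1 : nat) = i.-1 -> (o2 : nat) = i -> (0 < i)%N ->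
  sgen n i = tperm o1 o2.
Proof.
move=> e1 e2 i0; rewrite /sgen.
have -> : (insub i.-1 : option 'I_n) = Some o1 by rewrite -e1 valK.
by have -> : (insub i : option 'I_n) = Some o2 by rewrite -e2 valK.
Qed.

Lemma tpermE_nat (o1 o2 v : 'I_n) :
  (tperm o1 o2 v : nat) = if (v : nat) == o1 then (o2 : nat) else if (v : nat) == o2 then (o1 : nat) else v.
Proof.
rewrite !val_eqE; case: (eqVneq v o1) => [->|h1]; first by rewrite tpermL.
case: (eqVneq v o2) => [->|h2]; first by rewrite tpermR.
by rewrite tpermD // eq_sym.
Qed.

Lemma Tx_t (o1 o2 v w : 'I_n) : Tx (tperm o1 o2) v w =
  ((if (w : nat) == o1 then (o2 : nat) else if (w : nat) == o2 then (o1 : nat) else w) <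
   (if (v : nat) == o1 then (o2 : nat) else if (v : nat) == o2 then (o1 : nat) else v))%N.
Proof. by rewrite /Tx tpermV !tpermE_nat. Qed.

Lemma Tx_tt (o1 o2 o3 o4 v w : 'I_n) : Tx ((tperm o3 o4 * tperm o1 o2)%g) v w =
  (tperm o3 o4 (tperm o1 o2 w) < tperm o3 o4 (tperm o1 o2 v))%N.
Proof. by rewrite /Tx invMg !tpermV !permM. Qed.


Lemma J_self T (u : pred 'I_n) (p q : 'I_n) : Jg T u p q -> (p < q)%N -> T p q.
Proof. by move=> J pq; apply: J; rewrite ?eqxx. Qed.


Lemma Tx_adj (o1 o2 v w : 'I_n) : (o2 : nat) = o1.+1 -> (v < w)%N ->
  Tx (tperm o1 o2) v w = ((v : nat) == o1) && ((w : nat) == o2).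
Proof. rewrite Tx_t => e vw; move: e vw; crush. Qed.

Lemma Tx_up (o1 o2 o3 v w : 'I_n) : (o2 : nat) = o1.+1 -> (o3 : nat) = o2.+1 -> (v < w)%N ->
  Tx (tperm o2 o3 * tperm o1 o2)%g v w = ((v : nat) == o1) && (((w : nat) == o2) || ((w : nat) == o3)).
Proof. rewrite Tx_tt !tpermE_nat => e1 e2 vw; move: e1 e2 vw; crush. Qed.

Lemma Tx_dn (o1 o2 o3 v w : 'I_n) : (o2 : nat) = o1.+1 -> (o3 : nat) = o2.+1 -> (v < w)%N ->
  Tx (tperm o1 o2 * tperm o2 o3)%g v w = ((w : nat) == o3) && (((v : nat) == o1) || ((v : nat) == o2)).
Proof. rewrite Tx_tt !tpermE_nat => e1 e2 vw; move: e1 e2 vw; crush. Qed.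


Lemma gen_Rc (up : nat -> bool) (x y : 'S_n) :
  edge_rel up x y -> Rc (fun r => up r.+1) x y.
Proof.
case=> b' [h2 hb]; have hc : (b' < n)%N by lia.
have hc2 : (b'.-1 < n)%N by lia.
have hc1 : (b'.-2 < n)%N by lia.
pose o3 := Ordinal hc; pose o2 := Ordinal hc2; pose o1 := Ordinal hc1.
have s3 : sgen n b' = tperm o2 o3 by apply: sgenE => //; lia.
have s2 : sgen n b'.-1 = tperm o1 o2 by apply: sgenE => //; lia.
have e1 : (o1 : nat) = b'.-2 by []. have e2 : (o2 : nat) = b'.-1 by [].
have e3 : (o3 : nat) = b' by [].
have e21 : (o2 : nat) = o1.+1 by rewrite e1 e2; lia.
have e32 : (o3 : nat) = o2.+1 by rewrite e3 e2; lia.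
have Eu : up (o2 : nat).+1 = up b' by rewrite e2 prednK //; lia.
clearbody o1 o2 o3.
rewrite /comp s3 s2; case E: (up b') => /=; case=> -> -> p q pq; split.
- move=> J; have := J_self J pq; rewrite Tx_adj // => H; clear J.
  move=> v w pv vw wq _ _; rewrite Tx_up //; clear -H pv vw wq e21 e32 pq; lia.
- move=> J; have := J_self J pq; rewrite Tx_up // => H.
  have [qe|qne] := eqVneq (q : nat) o3.
    exfalso.
    have hp : (p <= o2)%N by clear -H e21 e32; lia.
    have h23 : (o2 < o3)%N by clear -e32; lia.
    have h3q : (o3 <= q)%N by rewrite qe.
    have hu : (o2 == p) || up (o2 : nat).+1 by rewrite Eu E orbT.
    have hw : (o3 == q) || ~~ up (o3 : nat).+1 by rewrite -val_eqE /= qe eqxx.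
    have := J o2 o3 hp h23 h3q hu hw; rewrite Tx_up //; clear -e21 e32; lia.
  clear J; move=> v w pv vw wq _ _; rewrite Tx_adj //.
  clear -H qne pv vw wq e21 e32 pq; lia.
- move=> J; have := J_self J pq; rewrite Tx_adj // => H; clear J.
  move=> v w pv vw wq _ _; rewrite Tx_dn //; clear -H pv vw wq e21 e32 pq; lia.
- move=> J; have := J_self J pq; rewrite Tx_dn // => H.
  have [pe|pne] := eqVneq (p : nat) o1.
    exfalso.
    have hq : (o2 < q)%N by clear -H e21 e32 pe pq; lia.
    have h12 : (o1 < o2)%N by clear -e21; lia.
    have hp1 : (p <= o1)%N by rewrite pe.
    have hu : (o1 == p) || up (o1 : nat).+1 by rewrite -val_eqE /= pe eqxx.
    have hw : (o2 == q) || ~~ up (o2 : nat).+1 by rewrite Eu E orbT.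
    have := J o1 o2 hp1 h12 (ltnW hq) hu hw; rewrite Tx_dn //; clear -e21 e32; lia.
  clear J; move=> v w pv vw wq _ _; rewrite Tx_adj //.
  clear -H pne pv vw wq e21 e32 pq; lia.
Qed.


Lemma Theta_Rc (up : nat -> bool) (x y : 'S_n) :
  Theta up x y -> Rc (fun r => up r.+1) x y.
Proof. move=> H; apply: H; [exact: Rc_cong | exact: gen_Rc]. Qed.

Definition gams a b S : 'S_n :=
  kperm (fun v => if (v : nat) == b then 4 * n + 4 * a + 2 else k0 a b S v).
Definition blk a b S (e1 e2 e3 : nat) : 'S_n :=
  kperm (fun v => if (v : nat) == e1 then 4 * n + 4 * a + 1 else
                  if (v : nat) == e2 then 4 * n + 4 * a + 2 else
                  if (v : nat) == e3 then 4 * n + 4 * a + 3 else k0 a b S v).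

Lemma gams_T a b S (v w : 'I_n) : (a < b)%N -> (v < w)%N ->
  Tx (gams a b S) v w = Aset a b S v && ~~ Aset a b S w && ~~ (((v : nat) == a) && ((w : nat) == b)).
Proof.
move=> ab vw; rewrite kperm_T // /k0 /Aset; have := ltn_ord v; have := ltn_ord w.
move: ab vw; clear; case: (S v); case: (S w); crush.
Qed.


Lemma covers_pair (x y : 'S_n) (v0 w0 : 'I_n) : (v0 < w0)%N ->
  Tx y v0 w0 -> ~~ Tx x v0 w0 ->
  (forall v w : 'I_n, (v < w)%N -> Tx y v w = Tx x v w || (((v : nat) == v0) && ((w : nat) == w0))) ->
  covers y x.
Proof.
move=> vw0 Ty Tx0 F; apply/andP; split.
- apply/andP; split.
    by apply/eqP => exy; move: Tx0; rewrite exy Ty.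
  by apply/weak_leP => v w vw T; rewrite F // T.
- apply/forallP => z; apply/negP => /andP [/andP [nxz xz] /andP [nzy zy]].
  case Tz: (Tx z v0 w0).
  + have yz : weak_le y z.
      apply/weak_leP => v w vw; rewrite F // => /orP [T|/andP [/eqP e1 /eqP e2]].
        exact: (weak_leP _ _ xz v w vw T).
      have ev : v = v0 by apply: val_inj; exact: e1.
      have ew : w = w0 by apply: val_inj; exact: e2.
      by rewrite ev ew.
    by move: nzy; rewrite (weak_le_antisym zy yz) eqxx.
  + have zx : weak_le z x.
      apply/weak_leP => v w vw T; have := weak_leP _ _ zy v w vw T.
      rewrite F // => /orP [//|/andP [/eqP e1 /eqP e2]].
      have ev : v = v0 by apply: val_inj; exact: e1.
      have ew : w = w0 by apply: val_inj; exact: e2.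
      by move: T; rewrite ev ew Tz.
    by move: nxz; rewrite (weak_le_antisym xz zx) eqxx.
Qed.

Lemma Aset_a a b S : Aset a b S a. Proof. by rewrite /Aset eqxx. Qed.
Lemma Aset_b a b S : (a < b)%N -> Aset a b S b = false.
Proof. rewrite /Aset; lia. Qed.

Lemma below_gam S (oa ob : 'I_n) (z : 'S_n) : (oa < ob)%N ->
  weak_le z (gam oa ob S) -> Tx z oa ob -> weak_le (gam oa ob S) z.
Proof.
move=> ab /weak_leP zg Tz; apply/weak_leP => v w vw; rewrite gam_T // => /andP [Av Aw].
have av : (oa <= v)%N by move: Av vw Aw; rewrite /Aset; clear; lia.
have wb : (w <= ob)%N by move: Av vw Aw; rewrite /Aset; clear; lia.
have h1 : (z^-1 oa <= z^-1 v)%N.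
  case: (ltngtP oa v) av => // [ov _|/val_inj -> _]; last exact: leqnn.
  have := zg oa v ov; rewrite gam_T // Aset_a Av /= /Tx => H.
  by case: leqP => // h; have := H h.
have h2 : (z^-1 w <= z^-1 ob)%N.
  case: (ltngtP w ob) wb => // [wo _|/val_inj -> _]; last exact: leqnn.
  have := zg w ob wo; rewrite gam_T // Aset_b // andbT (negbTE Aw) /Tx => H.
  by case: leqP => // h; have := H h.
move: Tz; rewrite /Tx; move: h1 h2; clear; lia.
Qed.

Lemma gam_cov S (oa ob : 'I_n) : (oa < ob)%N -> covers (gam oa ob S) (gams oa ob S).
Proof.
move=> ab; apply: (covers_pair ab).
- by rewrite gam_T // Aset_a Aset_b.
- by rewrite gams_T // !eqxx andbF.
- move=> v w vw; rewrite gam_T // gams_T //.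
  case E1: ((v : nat) == oa); case E2: ((w : nat) == ob); rewrite /= ?andbT ?andbF ?orbF ?orbT //.
  by move/eqP: E1 => ->; move/eqP: E2 => ->; rewrite Aset_a Aset_b.
Qed.

Lemma gam_cov_uniq S (oa ob : 'I_n) (z : 'S_n) : (oa < ob)%N ->
  covers (gam oa ob S) z -> z = gams oa ob S.
Proof.
move=> ab /andP [/andP [nzg zg] /forallP H].
have nT : ~~ Tx z oa ob.
  apply/negP => T; move: nzg; rewrite (weak_le_antisym zg (below_gam ab zg T)) eqxx.
  done.
have zgs : weak_le z (gams oa ob S).
  apply/weak_leP => v w vw T; have := weak_leP _ _ zg v w vw T.
  rewrite gam_T // gams_T // => ->; rewrite andTb; apply/negP => /andP [/eqP e1 /eqP e2].
  have ev : v = oa by apply: val_inj; exact: e1.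
  have ew : w = ob by apply: val_inj; exact: e2.
  by move: T; rewrite ev ew (negbTE nT).
case: (eqVneq z (gams oa ob S)) => // nz; exfalso.
have := H (gams oa ob S); rewrite /weak_lt nz zgs /=.
by case/andP: (gam_cov S ab) => /andP [-> ->].
Qed.

Lemma gam_join_irr S (oa ob : 'I_n) : (oa < ob)%N -> join_irr (gam oa ob S).
Proof.
move=> ab; rewrite /join_irr.
have -> : [set z | covers (gam oa ob S) z] = [set gams oa ob S].
  apply/setP => z; rewrite !inE; apply/idP/eqP => [|->]; first exact: gam_cov_uniq.
  exact: gam_cov.
by rewrite cards1.
Qed.


Lemma swap_nat (o1 o2 p q : nat) : o2 = o1.+1 -> p != q ->
  ((if q == o1 then o2 else if q == o2 then o1 else q) <
   (if p == o1 then o2 else if p == o2 then o1 else p)) =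
  (if (p == o1) && (q == o2) || (p == o2) && (q == o1)
   then ~~ (q < p) else q < p).
Proof. move=> e pq; move: e pq; crush. Qed.

Lemma Tx_swap (g : 'S_n) (o1 o2 v w : 'I_n) : (o2 : nat) = o1.+1 -> v != w ->
  Tx (tperm o1 o2 * g)%g v w =
  if (((g^-1 v : nat) == o1) && ((g^-1 w : nat) == o2)) || (((g^-1 v : nat) == o2) && ((g^-1 w : nat) == o1))
  then ~~ Tx g v w else Tx g v w.
Proof.
move=> e vw; rewrite /Tx invMg tpermV !permM !tpermE_nat.
have : (g^-1 v : nat) != g^-1 w by rewrite val_eqE (inj_eq (@perm_inj _ _)).
exact: swap_nat.
Qed.

Lemma rkset_gam S (oa ob : 'I_n) : (oa < ob)%N ->
  rkset (k0 oa ob S) oa = ob |: rkset (k0 oa ob S) ob.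
Proof.
move=> ab; apply/setP => w; rewrite !inE !kk_lt /k0 -val_eqE /=.
have := ltn_ord w; have := ltn_ord oa; have := ltn_ord ob; move: ab.
rewrite /Aset; clear; case: (S w); case: (S oa); case: (S ob); crush.
Qed.

Lemma gam_pos S (oa ob : 'I_n) : (oa < ob)%N ->
  ((gam oa ob S)^-1 oa : nat) = ((gam oa ob S)^-1 ob).+1.
Proof.
move=> ab; rewrite /gam !kperm_inv /rkf /= rkset_gam // cardsU1.
by rewrite /rkset inE ltnn.
Qed.

Lemma perm_inv_eq_nat (g : 'S_n) (v w : 'I_n) :
  ((g^-1 v : nat) == g^-1 w) = ((v : nat) == w).
Proof. by rewrite !val_eqE (inj_eq (@perm_inj _ _)). Qed.

Lemma gs_nat (v w a b : nat) (Av Aw : bool) : (v < w)%N -> (a < b)%N ->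
  (v == a -> Av) -> (w == b -> ~~ Aw) ->
  (if ((v == b) && (w == a)) || ((v == a) && (w == b)) then ~~ (Av && ~~ Aw) else Av && ~~ Aw)
  = Av && ~~ Aw && ~~ ((v == a) && (w == b)).
Proof.
move=> vw ab hA hB; case E1: (v == a); case E2: (w == b); rewrite /= ?andbT ?andbF //=;
  try (have -> : (v == b) && (w == a) = false by move: vw ab; clear; lia); rewrite //= ?andbT //.
by rewrite hA // (negbTE (hB E2)).
Qed.

Lemma gams_swap S (oa ob : 'I_n) (o1 o2 : 'I_n) : (oa < ob)%N ->
  o1 = (gam oa ob S)^-1 ob -> o2 = (gam oa ob S)^-1 oa ->
  (tperm o1 o2 * gam oa ob S)%g = gams oa ob S.
Proof.
move=> ab e1 e2; have e : (o2 : nat) = o1.+1 by rewrite e1 e2 gam_pos.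
apply: eqTx => v w vw.
have nvw : v != w by rewrite -val_eqE /=; move: vw; clear; lia.
rewrite Tx_swap // e1 e2 !perm_inv_eq_nat gam_T // gams_T //.
apply: gs_nat => // /eqP ->; [exact: Aset_a | by rewrite Aset_b].
Qed.

Lemma gam_assoc S (oa ob : 'I_n) : (oa < ob)%N ->
  assoc_left_reflection (gam oa ob S) (tperm oa ob).
Proof.
move=> ab; set g := gam oa ob S.
pose d := g^-1 ob; pose e := g^-1 oa.
have ed : (e : nat) = d.+1 by rewrite /e /d /g gam_pos.
exists d.+1; have sg : sgen n d.+1 = tperm d e by apply: sgenE.
have sw : (tperm d e * g)%g = gams oa ob S by apply: gams_swap.
have cE : Defs.comp g (sgen n d.+1) = gams oa ob S by rewrite /Defs.comp sg.
split.
- apply/and3P; split => //; first by have := ltn_ord e; rewrite ed; clear; lia.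
  by rewrite cE; case/andP: (gam_cov S ab).
- rewrite /Defs.comp sg -/g.
  have -> : (g^-1 * (tperm d e * g))%g = ((tperm d e) ^ g)%g by [].
  by rewrite tpermJ /d /e !permKV tpermC.
Qed.

Lemma gam_lists S (oa ob : 'I_n) (A : {set 'I_n}) : (oa < ob)%N ->
  (forall k : 'I_n, (k \in A) = Aset oa ob S k) ->
  lists_compl_then A (gam oa ob S).
Proof.
move=> ab HA; set g := gam oa ob S; split.
- move=> i; rewrite HA.
  have -> : i = g^-1 (g i) by rewrite permK.
  rewrite permKV; set v := g i; rewrite /g /gam kperm_inv /rkf /=.
  case Av: (Aset oa ob S v).
  + apply/esym; apply: subset_leq_card; apply/subsetP => w; rewrite !inE HA kk_lt /k0 Av.
    move=> Aw; rewrite (negbTE Aw); have := ltn_ord w; clear; lia.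
  + apply/esym/negbTE; rewrite -ltnNge.
    apply: (@leq_ltn_trans #|~: A :\ v|).
      apply: subset_leq_card; apply/subsetP => w; rewrite !inE HA kk_lt /k0 Av.
      case Aw: (Aset oa ob S w) => /=; rewrite -val_eqE /=;
        have := ltn_ord w; have := ltn_ord v; clear; lia.
    rewrite (cardsD1 v (~: A)) !inE HA Av /=; lia.
- move=> i j ij; rewrite !HA => E.
  case: (ltngtP (g i) (g j)) => // [h|/val_inj/perm_inj e]; last by move: ij; rewrite e ltnn.
  by have := gam_T oa ob S h; rewrite -/g E andbN /Tx !permK ij.
Qed.


Lemma AsetE a b S v : Aset a b S v = (v == a) || ((a < v) && (v < b) && S v) || (b < v).
Proof. by []. Qed.

Lemma is_joinI (X Z J : 'S_n) : weak_le X J -> weak_le Z J ->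
  (forall v w : 'I_n, v < w -> Tx J v w -> Tx X v w \/ Tx Z v w \/
     exists m : 'I_n, [/\ v < m, m < w & (Tx X v m && Tx Z m w) || (Tx Z v m && Tx X m w)]) ->
  is_join X Z J.
Proof.
move=> XJ ZJ H; apply/and3P; split => //; apply/forallP => u; apply/implyP => /weak_leP Xu.
apply/implyP => /weak_leP Zu; apply/weak_leP => v w vw T.
case: (H v w vw T) => [/(Xu _ _ vw) //|[/(Zu _ _ vw) //|[m [vm mw /orP [/andP [h1 h2]|/andP [h1 h2]]]]]].
- have := Xu _ _ vm h1; have := Zu _ _ mw h2; rewrite /Tx; clear; lia.
- have := Zu _ _ vm h1; have := Xu _ _ mw h2; rewrite /Tx; clear; lia.
Qed.

Lemma is_join_triv (X Z : 'S_n) : weak_le Z X -> is_join Z X X.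
Proof.
move=> ZX; apply/and3P; split => //; first exact: weak_le_refl.
by apply/forallP => u; apply/implyP => _; apply/implyP.
Qed.

Lemma is_meetI (X Z M : 'S_n) : weak_le M X -> weak_le M Z ->
  (forall v w : 'I_n, v < w -> Tx X v w -> Tx Z v w -> Tx M v w) -> is_meet X Z M.
Proof.
move=> MX MZ H; apply/and3P; split => //; apply/forallP => u; apply/implyP => /weak_leP uX.
by apply/implyP => /weak_leP uZ; apply/weak_leP => v w vw T; apply: H => //; [apply: uX | apply: uZ].
Qed.

Lemma is_meet_triv (X Z : 'S_n) : weak_le Z X -> is_meet X Z Z.
Proof.
move=> ZX; apply/and3P; split => //; first exact: weak_le_refl.
by apply/forallP => u; apply/implyP => _; apply/implyP.
Qed.

Lemma is_meet_triv2 (X Z : 'S_n) : weak_le X Z -> is_meet X Z X.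
Proof.
move=> XZ; apply/and3P; split => //; first exact: weak_le_refl.
by apply/forallP => u; apply/implyP => h; apply/implyP.
Qed.

Lemma cong_conv (R : 'S_n -> 'S_n -> Prop) (u m y : 'S_n) : lattice_congruence R ->
  R u y -> weak_le u m -> weak_le m y -> R m y.
Proof.
case=> _ Rsym Rtr _ Rmeet Ruy um my.
have Rum : R u m := Rmeet u y m u m Ruy (is_meet_triv2 um) (is_meet_triv my).
exact: Rtr _ _ _ (Rsym _ _ Rum) Ruy.
Qed.

End Camb.

Arguments Aset : simpl never.

Definition cl8 (v a c b : nat) (P : Prop) (x1 x2 x3 x4 x5 x6 x7 x8 : bool) : Prop :=
  [/\ P, (v == a) = x1, (v == c) = x2, (v == b) = x3 &
   [/\ (a < v) = x4, (c < v) = x5, (v < c) = x6, (v < b) = x7 & (b < v) = x8]].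

Lemma cls2 (v a c b : nat) : a < c -> c < b ->
  [\/ cl8 v a c b (v < a) false false false false false true true false,
       cl8 v a c b (v = a) true false false false false true true false,
       cl8 v a c b (v = c) false true false true false false true false |
   [\/ cl8 v a c b (v = b) false false true true true false false false,
        cl8 v a c b (b < v) false false false true true false false true,
        cl8 v a c b (a < v /\ v < c) false false false true false true true false |
        cl8 v a c b (c < v /\ v < b) false false false true true false true false]].
Proof.
move=> ac cb; rewrite /cl8.
case: (ltngtP v a) => [h|h|h].
- by apply: Or41; split; try split; lia.
- case: (ltngtP v c) => [h2|h2|h2].
  + by apply: Or44; apply: Or43; split; try split; lia.
  + case: (ltngtP v b) => [h3|h3|h3].
    * by apply: Or44; apply: Or44; split; try split; lia.
    * by apply: Or44; apply: Or42; split; try split; lia.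
    * by apply: Or44; apply: Or41; split; try split; lia.
  + by apply: Or43; split; try split; lia.
- by apply: Or42; split; try split; lia.
Qed.

Ltac csplit v a c b :=
  let e1 := fresh "e" in let e2 := fresh "e" in let e3 := fresh "e" in let e4 := fresh "e" in
  let e5 := fresh "e" in let e6 := fresh "e" in let e7 := fresh "e" in let e8 := fresh "e" in
  let P := fresh "P" in
  case: (@cls2 v a c b ltac:(lia) ltac:(lia)) =>
    [[P e1 e2 e3 [e4 e5 e6 e7 e8]]|[P e1 e2 e3 [e4 e5 e6 e7 e8]]|[P e1 e2 e3 [e4 e5 e6 e7 e8]]
    |[[P e1 e2 e3 [e4 e5 e6 e7 e8]]|[P e1 e2 e3 [e4 e5 e6 e7 e8]]|[P e1 e2 e3 [e4 e5 e6 e7 e8]]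
    |[P e1 e2 e3 [e4 e5 e6 e7 e8]]]];
  rewrite ?e1 ?e2 ?e3 ?e4 ?e5 ?e6 ?e7 ?e8 /=; clear e1 e2 e3 e4 e5 e6 e7 e8.

Ltac fin v w a c b S ab :=
  move: ab; move: (v : nat) (w : nat) => {}v {}w; clear;
  move=> ab hv hw vw;
  csplit v a c b; csplit w a c b;
  (match goal with |- context [S v] => case: (S v) => /= | _ => idtac end);
  (match goal with |- context [S w] => case: (S w) => /= | _ => idtac end); lia.

Ltac finS v w a c b S Sc ab :=
  move: Sc ab; move: (v : nat) (w : nat) => {}v {}w; clear;
  move=> Sc ab hv hw vw;
  csplit v a c b; try (match goal with H : v = c |- _ => rewrite H Sc /= end);
  csplit w a c b; try (match goal with H : w = c |- _ => rewrite H Sc /= end);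
  (match goal with |- context [S v] => case: (S v) => /= | _ => idtac end);
  (match goal with |- context [S w] => case: (S w) => /= | _ => idtac end); lia.

Ltac finH v w a c b S H ab :=
  move: H ab; move: (v : nat) (w : nat) => {}v {}w; clear;
  move=> H ab hv hw vw;
  csplit v a c b; csplit w a c b;
  (match goal with |- context [S v] => case: (S v) => /= | _ => idtac end);
  (match goal with |- context [S w] => case: (S w) => /= | _ => idtac end); lia.

Ltac decide_ifs := repeat match goal with
 | |- context [if ?c then _ else _] =>
   let E := fresh "E" in
   first [ have E : c = true by lia | have E : c = false by lia ]; rewrite E /=; clear E
 end.

Section Force.
Variable n : nat.
Local Open Scope nat_scope.
Local Notation gam := (gam n).
Local Notation gams := (gams n).
Local Notation blk := (blk n).

Lemma forceL (R : 'S_n -> 'S_n -> Prop) (HR : lattice_congruence R) a b S :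
  a.+1 < b -> b < n -> R (gams a.+1 b S) (gam a.+1 b S) -> R (gams a b S) (gam a b S).
Proof.
move=> ab bn H.
have oan : a < n by lia. have oa1n : a.+1 < n by lia.
pose oa1 := Ordinal oa1n.
pose x := blk a b S a.+1 a b; pose Y := blk a b S b a.+1 a.
have F1 : weak_le (gams a.+1 b S) x.
  apply/weak_leP => v w vw; rewrite /gams /x /blk !kperm_T // /k0.
  rewrite !AsetE; have := ltn_ord v; have := ltn_ord w; move: vw.
  fin v w a a.+1 b S ab.
have F2a : weak_le x Y.
  apply/weak_leP => v w vw; rewrite /Y /x /blk !kperm_T // /k0 !AsetE.
  have := ltn_ord v; have := ltn_ord w; move: vw.
  fin v w a a.+1 b S ab.
have F2b : weak_le (gam a.+1 b S) Y.
  apply/weak_leP => v w vw; rewrite /Y /gam /blk !kperm_T // /k0 !AsetE.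
  have := ltn_ord v; have := ltn_ord w; move: vw.
  fin v w a a.+1 b S ab.
have F3 : weak_le (gam a b S) Y.
  apply/weak_leP => v w vw; rewrite /Y /gam /blk !kperm_T // /k0 !AsetE.
  have := ltn_ord v; have := ltn_ord w; move: vw.
  fin v w a a.+1 b S ab.
have F2c : is_join (gam a.+1 b S) x Y.
  apply: is_joinI => // v w vw T.
  case: (boolP (((v : nat) == a) && ((w : nat) == b))) => [/andP [/eqP ev /eqP ew]|ne].
  - right; right; exists oa1; split; [rewrite ev /=; move: ab; clear; lia | rewrite ew /=; move: ab; clear; lia |].
    have v1 : v < oa1 by rewrite ev /=; move: ab; clear; lia.
    have w1 : oa1 < w by rewrite ew /=; move: ab; clear; lia.
    rewrite /x /gam /blk !kperm_T // /k0 !AsetE ev ew /=.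
    move: ab bn; clear; move=> ab bn; decide_ifs; lia.
  - have : Tx x v w || Tx (gam a.+1 b S) v w.
      move: T; rewrite /Y /x /gam /blk !kperm_T // /k0 !AsetE.
      have := ltn_ord v; have := ltn_ord w; move: vw.
      finH v w a a.+1 b S ne ab.
    by case/orP => [h|h]; [right; left | left].
have [Rrefl Rsym Rtr Rjoin Rmeet] := HR.
have RxY : R x Y := Rjoin _ _ _ _ _ H (is_join_triv F1) F2c.
have gsg : weak_le (gams a b S) (gam a b S).
  apply/weak_leP => v w vw; rewrite /gams /gam !kperm_T // /k0 !AsetE.
  have := ltn_ord v; have := ltn_ord w; move: vw.
  fin v w a a.+1 b S ab.
case Sc : (S a.+1).
- pose u := blk a b S a a.+1 b.
  have M1 : weak_le u x.
    apply/weak_leP => v w vw; rewrite /u /x /blk !kperm_T // /k0 !AsetE.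
    have := ltn_ord v; have := ltn_ord w; move: vw.
    finS v w a a.+1 b S Sc ab.
  have M2 : weak_le u (gam a b S).
    apply/weak_leP => v w vw; rewrite /u /gam /blk !kperm_T // /k0 !AsetE.
    have := ltn_ord v; have := ltn_ord w; move: vw.
    finS v w a a.+1 b S Sc ab.
  have M3 : weak_le u (gams a b S).
    apply/weak_leP => v w vw; rewrite /u /gams /blk !kperm_T // /k0 !AsetE.
    have := ltn_ord v; have := ltn_ord w; move: vw.
    finS v w a a.+1 b S Sc ab.
  have Mm : is_meet x (gam a b S) u.
    apply: is_meetI => // v w vw; rewrite /u /x /gam /blk !kperm_T // /k0 !AsetE.
    have := ltn_ord v; have := ltn_ord w; move: vw.
    finS v w a a.+1 b S Sc ab.
  have Rug : R u (gam a b S) := Rmeet _ _ _ _ _ RxY Mm (is_meet_triv F3).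
  exact: (cong_conv HR Rug M3 gsg).
- have M1 : weak_le (gams a b S) x.
    apply/weak_leP => v w vw; rewrite /gams /x /blk !kperm_T // /k0 !AsetE.
    have := ltn_ord v; have := ltn_ord w; move: vw.
    finS v w a a.+1 b S Sc ab.
  have Mm : is_meet x (gam a b S) (gams a b S).
    apply: is_meetI => // v w vw; rewrite /gams /x /gam /blk !kperm_T // /k0 !AsetE.
    have := ltn_ord v; have := ltn_ord w; move: vw.
    finS v w a a.+1 b S Sc ab.
  exact: Rmeet _ _ _ _ _ RxY Mm (is_meet_triv F3).
Qed.


Lemma forceR (R : 'S_n -> 'S_n -> Prop) (HR : lattice_congruence R) a b S :
  a.+1 < b -> b < n -> R (gams a b.-1 S) (gam a b.-1 S) -> R (gams a b S) (gam a b S).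
Proof.
move=> ab bn H.
have oan : a < n by lia. have oa1n : b.-1 < n by lia.
pose oa1 := Ordinal oa1n.
pose x := blk a b S a b b.-1; pose Y := blk a b S b b.-1 a.
have F1 : weak_le (gams a b.-1 S) x.
  apply/weak_leP => v w vw; rewrite /gams /x /blk !kperm_T // /k0.
  rewrite !AsetE; have := ltn_ord v; have := ltn_ord w; move: vw.
  fin v w a b.-1 b S ab.
have F2a : weak_le x Y.
  apply/weak_leP => v w vw; rewrite /Y /x /blk !kperm_T // /k0 !AsetE.
  have := ltn_ord v; have := ltn_ord w; move: vw.
  fin v w a b.-1 b S ab.
have F2b : weak_le (gam a b.-1 S) Y.
  apply/weak_leP => v w vw; rewrite /Y /gam /blk !kperm_T // /k0 !AsetE.
  have := ltn_ord v; have := ltn_ord w; move: vw.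
  fin v w a b.-1 b S ab.
have F3 : weak_le (gam a b S) Y.
  apply/weak_leP => v w vw; rewrite /Y /gam /blk !kperm_T // /k0 !AsetE.
  have := ltn_ord v; have := ltn_ord w; move: vw.
  fin v w a b.-1 b S ab.
have F2c : is_join (gam a b.-1 S) x Y.
  apply: is_joinI => // v w vw T.
  case: (boolP (((v : nat) == a) && ((w : nat) == b))) => [/andP [/eqP ev /eqP ew]|ne].
  - right; right; exists oa1; split; [rewrite ev /=; move: ab; clear; lia | rewrite ew /=; move: ab; clear; lia |].
    have v1 : v < oa1 by rewrite ev /=; move: ab; clear; lia.
    have w1 : oa1 < w by rewrite ew /=; move: ab; clear; lia.
    rewrite /x /gam /blk !kperm_T // /k0 !AsetE ev ew /=.
    move: ab bn; clear; move=> ab bn; decide_ifs; lia.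
  - have : Tx x v w || Tx (gam a b.-1 S) v w.
      move: T; rewrite /Y /x /gam /blk !kperm_T // /k0 !AsetE.
      have := ltn_ord v; have := ltn_ord w; move: vw.
      finH v w a b.-1 b S ne ab.
    by case/orP => [h|h]; [right; left | left].
have [Rrefl Rsym Rtr Rjoin Rmeet] := HR.
have RxY : R x Y := Rjoin _ _ _ _ _ H (is_join_triv F1) F2c.
have gsg : weak_le (gams a b S) (gam a b S).
  apply/weak_leP => v w vw; rewrite /gams /gam !kperm_T // /k0 !AsetE.
  have := ltn_ord v; have := ltn_ord w; move: vw.
  fin v w a b.-1 b S ab.
case Sc : (S b.-1).
- have M1 : weak_le (gams a b S) x.
    apply/weak_leP => v w vw; rewrite /gams /x /blk !kperm_T // /k0 !AsetE.
    have := ltn_ord v; have := ltn_ord w; move: vw.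
    finS v w a b.-1 b S Sc ab.
  have Mm : is_meet x (gam a b S) (gams a b S).
    apply: is_meetI => // v w vw; rewrite /gams /x /gam /blk !kperm_T // /k0 !AsetE.
    have := ltn_ord v; have := ltn_ord w; move: vw.
    finS v w a b.-1 b S Sc ab.
  exact: Rmeet _ _ _ _ _ RxY Mm (is_meet_triv F3).
- pose u := blk a b S a b.-1 b.
  have M1 : weak_le u x.
    apply/weak_leP => v w vw; rewrite /u /x /blk !kperm_T // /k0 !AsetE.
    have := ltn_ord v; have := ltn_ord w; move: vw.
    finS v w a b.-1 b S Sc ab.
  have M2 : weak_le u (gam a b S).
    apply/weak_leP => v w vw; rewrite /u /gam /blk !kperm_T // /k0 !AsetE.
    have := ltn_ord v; have := ltn_ord w; move: vw.
    finS v w a b.-1 b S Sc ab.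
  have M3 : weak_le u (gams a b S).
    apply/weak_leP => v w vw; rewrite /u /gams /blk !kperm_T // /k0 !AsetE.
    have := ltn_ord v; have := ltn_ord w; move: vw.
    finS v w a b.-1 b S Sc ab.
  have Mm : is_meet x (gam a b S) u.
    apply: is_meetI => // v w vw; rewrite /u /x /gam /blk !kperm_T // /k0 !AsetE.
    have := ltn_ord v; have := ltn_ord w; move: vw.
    finS v w a b.-1 b S Sc ab.
  have Rug : R u (gam a b S) := Rmeet _ _ _ _ _ RxY Mm (is_meet_triv F3).
  exact: (cong_conv HR Rug M3 gsg).
Qed.

End Force.


Section Force2.
Variable n : nat.
Local Open Scope nat_scope.
Local Notation gam := (gam n).
Local Notation gams := (gams n).
Local Notation blk := (blk n).

Lemma force_base (up : nat -> bool) (R : 'S_n -> 'S_n -> Prop)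
  (Hgen : forall x y, edge_rel up x y -> R x y) a S :
  a.+2 < n -> S a.+1 != up a.+2 -> R (gams a a.+2 S) (gam a a.+2 S).
Proof.
move=> an Sne.
have h1 : a < n by lia. have h2 : a.+1 < n by lia.
pose oa := Ordinal h1; pose oc := Ordinal h2; pose ob := Ordinal an.
have e21 : (oc : nat) = oa.+1 by []. have e32 : (ob : nat) = oc.+1 by [].
have s1 : sgen n a.+1 = tperm oa oc by apply: sgenE.
have s2 : sgen n a.+2 = tperm oc ob by apply: sgenE.
have ab : a.+1 < a.+2 by [].
have E : edge_rel up (if up a.+2 then sgen n a.+1 else sgen n a.+2)
    (if up a.+2 then Defs.comp (sgen n a.+1) (sgen n a.+2) else Defs.comp (sgen n a.+2) (sgen n a.+1)).
  exists a.+2; split; [by []| by lia|]; by case: (up a.+2).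
move: E; rewrite /Defs.comp s1 s2; case Eu: (up a.+2) => /= E.
- have Sc : S a.+1 = false by move: Sne; rewrite Eu; case: (S a.+1).
  have g1 : gams a a.+2 S = tperm oa oc.
    apply: eqTx => v w vw; rewrite Tx_adj // /gams kperm_T // /k0 !AsetE.
    have := ltn_ord v; have := ltn_ord w; move: vw.
    move: Sc ab; move: (v : nat) (w : nat) => {}v {}w; clear => Sc ab hv hw vw.
    csplit v a a.+1 a.+2; try (match goal with H : v = a.+1 |- _ => rewrite H Sc /= end);
    csplit w a a.+1 a.+2; try (match goal with H : w = a.+1 |- _ => rewrite H Sc /= end);
    (match goal with |- context [S v] => case: (S v) => /= | _ => idtac end);
    (match goal with |- context [S w] => case: (S w) => /= | _ => idtac end); lia.
  have g2 : gam a a.+2 S = (tperm oc ob * tperm oa oc)%g.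
    apply: eqTx => v w vw; rewrite Tx_up // /gam kperm_T // /k0 !AsetE.
    have := ltn_ord v; have := ltn_ord w; move: vw.
    move: Sc ab; move: (v : nat) (w : nat) => {}v {}w; clear => Sc ab hv hw vw.
    csplit v a a.+1 a.+2; try (match goal with H : v = a.+1 |- _ => rewrite H Sc /= end);
    csplit w a a.+1 a.+2; try (match goal with H : w = a.+1 |- _ => rewrite H Sc /= end);
    (match goal with |- context [S v] => case: (S v) => /= | _ => idtac end);
    (match goal with |- context [S w] => case: (S w) => /= | _ => idtac end); lia.
  by rewrite g1 g2; apply: Hgen.
- have Sc : S a.+1 = true by move: Sne; rewrite Eu; case: (S a.+1).
  have g1 : gams a a.+2 S = tperm oc ob.
    apply: eqTx => v w vw; rewrite Tx_adj // /gams kperm_T // /k0 !AsetE.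
    have := ltn_ord v; have := ltn_ord w; move: vw.
    move: Sc ab; move: (v : nat) (w : nat) => {}v {}w; clear => Sc ab hv hw vw.
    csplit v a a.+1 a.+2; try (match goal with H : v = a.+1 |- _ => rewrite H Sc /= end);
    csplit w a a.+1 a.+2; try (match goal with H : w = a.+1 |- _ => rewrite H Sc /= end);
    (match goal with |- context [S v] => case: (S v) => /= | _ => idtac end);
    (match goal with |- context [S w] => case: (S w) => /= | _ => idtac end); lia.
  have g2 : gam a a.+2 S = (tperm oa oc * tperm oc ob)%g.
    apply: eqTx => v w vw; rewrite Tx_dn // /gam kperm_T // /k0 !AsetE.
    have := ltn_ord v; have := ltn_ord w; move: vw.
    move: Sc ab; move: (v : nat) (w : nat) => {}v {}w; clear => Sc ab hv hw vw.
    csplit v a a.+1 a.+2; try (match goal with H : v = a.+1 |- _ => rewrite H Sc /= end);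
    csplit w a a.+1 a.+2; try (match goal with H : w = a.+1 |- _ => rewrite H Sc /= end);
    (match goal with |- context [S v] => case: (S v) => /= | _ => idtac end);
    (match goal with |- context [S w] => case: (S w) => /= | _ => idtac end); lia.
  by rewrite g1 g2; apply: Hgen.
Qed.

Lemma force_all (up : nat -> bool) (R : 'S_n -> 'S_n -> Prop) (HR : lattice_congruence R)
  (Hgen : forall x y, edge_rel up x y -> R x y) :
  forall d a b S, b - a <= d -> a < b -> b < n ->
  (exists c, a < c < b /\ S c != up c.+1) -> R (gams a b S) (gam a b S).
Proof.
elim=> [|d IH] a b S dd ab bn [c [cr Sc]]; first by lia.
have [e2|ne2] := eqVneq b a.+2.
  subst b; have ec : c = a.+1 by lia.
  subst c; exact: (force_base Hgen bn Sc).
have a3 : a.+2 < b by lia.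
have [ac|ac] := ltnP a.+1 c.
- apply: (forceL HR); [lia | done |].
  apply: IH; [lia | lia | done | by exists c; split; [lia|]].
- have ec : c = a.+1 by lia. subst c.
  apply: (forceR HR); [lia | done |].
  apply: IH; [lia | lia | lia | by exists a.+1; split; [lia|]].
Qed.

Lemma Theta_contr (up : nat -> bool) a b S : a < b -> b < n ->
  (exists c, a < c < b /\ S c != up c.+1) -> Theta up (gam a b S) (gams a b S).
Proof.
move=> ab bn ex R HR Hgen; have [_ Rsym _ _ _] := HR.
by apply: Rsym; apply: (force_all HR Hgen (leqnn _)).
Qed.

End Force2.


Section Main.
Variable n : nat.
Local Notation gam := (gam n).
Local Notation gams := (gams n).

Lemma tperm_eq (a b c d : 'I_n) : a != b -> tperm a b = tperm c d ->
  (a = c /\ b = d) \/ (a = d /\ b = c).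
Proof.
move=> ab E; have h := congr1 (fun s : 'S_n => s a) E; rewrite /= tpermL in h.
case: (eqVneq a c) => [ac|ac].
  by left; split => //; move: h; rewrite ac tpermL.
case: (eqVneq a d) => [ad|ad].
  by right; split => //; move: h; rewrite ad tpermR.
by move: h; rewrite tpermD 1?eq_sym // => e; move: ab; rewrite e eqxx.
Qed.

Lemma pinv_eq (g : 'S_n) (v o : 'I_n) : ((g^-1 v : nat) == o) = ((v : nat) == g o).
Proof.
rewrite !val_eqE; apply/eqP/eqP => [<-|->]; [by rewrite permKV | by rewrite permK].
Qed.

Lemma cover_desc (g : 'S_n) (o1 o2 : 'I_n) : (o2 : nat) = o1.+1 -> (g o2 < g o1)%N ->
  covers g (tperm o1 o2 * g).
Proof.
move=> e gd.
apply: (@covers_pair n _ _ (g o2) (g o1) gd).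
- by rewrite /Tx !permK e.
- have ne : g o2 != g o1 by rewrite -val_eqE /=; move: gd; clear; lia.
  rewrite Tx_swap // !pinv_eq !eqxx orbT negbK.
  by rewrite /Tx !permK e.
- move=> v w vw; have nvw : v != w by rewrite -val_eqE /=; move: vw; clear; lia.
  rewrite Tx_swap // !pinv_eq.
  case E1: ((v : nat) == g o1); case E2: ((w : nat) == g o2);
  case E3: ((v : nat) == g o2); case E4: ((w : nat) == g o1) => /=;
  rewrite ?orbF ?orbT ?andbF ?andbT //;
  try (move: vw gd E1 E2 E3 E4; clear; lia).
  move/eqP: E3 => E3; move/eqP: E4 => E4.
  have -> : v = g o2 by apply: val_inj. have -> : w = g o1 by apply: val_inj.
  by rewrite /Tx !permK e ltnSn.
Qed.


Lemma rd_desc (g : 'S_n) (i : nat) : right_descent g i ->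
  exists o1 o2 : 'I_n, [/\ (o2 : nat) = o1.+1, sgen n i = tperm o1 o2, (g o2 < g o1)%N &
     Defs.comp g (sgen n i) = (tperm o1 o2 * g)].
Proof.
case/and3P => i1 iN /andP [_ wle].
have h2 : (i < n)%N by lia. have h1 : (i.-1 < n)%N by lia.
pose o1 := Ordinal h1; pose o2 := Ordinal h2.
have e : (o2 : nat) = o1.+1 by rewrite /= prednK.
have sg : sgen n i = tperm o1 o2 by apply: sgenE.
have cE : Defs.comp g (sgen n i) = (tperm o1 o2 * g) by rewrite /Defs.comp sg.
exists o1, o2; split => //.
move: wle; rewrite cE => /weak_leP H.
case: (ltngtP (g o2) (g o1)) => // [h|h].
- have ne : g o1 != g o2 by rewrite -val_eqE /=; move: h; clear; lia.
  have := H _ _ h; rewrite Tx_swap // !pinv_eq !eqxx /= /Tx !permK e; clear; lia.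
- by move/val_inj/perm_inj: h => h; move: e; rewrite h; clear; lia.
Qed.

Lemma join_irr_nodesc (g : 'S_n) (o1 o2 : 'I_n) : (o2 : nat) = o1.+1 -> (g o2 < g o1)%N ->
  join_irr g -> forall e e' : 'I_n, (e' : nat) = e.+1 -> e != o1 -> (g e < g e')%N.
Proof.
move=> eo gd JI e e' ee ne.
case: (ltngtP (g e) (g e')) => // [h|h]; exfalso.
- have c1 := cover_desc eo gd; have c2 := cover_desc ee h.
  have dist : (tperm e e' * g) != (tperm o1 o2 * g).
    apply/negP => /eqP /mulIg E.
    have nee : e != e' by rewrite -val_eqE /= ee; clear; lia.
    case: (tperm_eq nee E) => [[h1 _]|[h1 h2]]; first by move: ne; rewrite h1 eqxx.
    by move: ee; rewrite h1 h2 eo; clear; lia.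
  have sub : [set (tperm e e' * g); (tperm o1 o2 * g)] \subset [set z | covers g z].
    by apply/subsetP => z; rewrite !inE => /orP [/eqP ->|/eqP ->].
  have := subset_leq_card sub; move: JI; rewrite /join_irr => /eqP ->.
  by rewrite cards2 dist.
- by move/val_inj/perm_inj: h => h; move: ee; rewrite h; clear; lia.
Qed.

Lemma mono_block (g : 'S_n) (o1 : 'I_n)
  (Hnd : forall e e' : 'I_n, (e' : nat) = e.+1 -> e != o1 -> (g e < g e')%N) :
  forall i j : 'I_n, (i < j)%N -> (j <= o1)%N || (o1 < i)%N -> (g i < g j)%N.
Proof.
suff : forall d (i j : 'I_n), (j - i)%N = d.+1 -> (j <= o1)%N || (o1 < i)%N -> (g i < g j)%N.
  by move=> H i j ij; apply: (H (j - i).-1); lia.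
elim=> [|d IH] i j dij hb.
- apply: Hnd; first by lia.
  by rewrite -val_eqE /=; move: dij hb; clear; lia.
- have hk : (j.-1 < n)%N by have := ltn_ord j; lia.
  pose k := Ordinal hk.
  have h1 : (g i < g k)%N by apply: IH => /=; move: dij hb; clear; lia.
  have h2 : (g k < g j)%N.
    apply: Hnd => /=; first by move: dij; clear; lia.
    by rewrite -val_eqE /=; move: dij hb; clear; lia.
  exact: ltn_trans h1 h2.
Qed.


Definition Sg (g : 'S_n) (o1 : 'I_n) (v : nat) : bool :=
  [exists o : 'I_n, ((o : nat) == v) && (o1 < g^-1 o)%N].

Lemma SgE (g : 'S_n) (o1 o : 'I_n) : Sg g o1 o = (o1 < g^-1 o)%N.
Proof.
apply/existsP/idP => [[o' /andP [/eqP e h]]|h]; last by exists o; rewrite eqxx.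
by have <- : o' = o by apply: val_inj.
Qed.

Lemma g_is_gam (g : 'S_n) (o1 o2 : 'I_n) : (o2 : nat) = o1.+1 -> (g o2 < g o1)%N ->
  (forall e e' : 'I_n, (e' : nat) = e.+1 -> e != o1 -> (g e < g e')%N) ->
  g = gam (g o2) (g o1) (Sg g o1).
Proof.
move=> eo gd Hnd; have mono := mono_block Hnd.
have AB : forall v : 'I_n, Aset (g o2) (g o1) (Sg g o1) v = (o1 < g^-1 v)%N.
  move=> v; rewrite AsetE SgE.
  have ev : v = g (g^-1 v) by rewrite permKV.
  set p := g^-1 v in ev *.
  case: (eqVneq (v : nat) (g o2)) => [e|ne] /=.
    have -> : p = o2 by apply: (@perm_inj _ g); rewrite -ev; apply: val_inj.
    by rewrite eo ltnSn.
  case: (ltngtP (v : nat) (g o2)) => [h|h|h]; last by move: ne; rewrite h eqxx.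
  - rewrite /=; have -> : (g o1 < v)%N = false by move: h gd; clear; lia.
    apply/esym/negbTE; apply/negP => op.
    case: (eqVneq p o2) => [po|po]; first by move: h; rewrite ev po ltnn.
    have o2p : (o2 < p)%N by move: op po eo; rewrite -val_eqE /=; clear; lia.
    have h3 : (g o2 < v)%N by rewrite ev; apply: mono o2p _; rewrite eo ltnSn orbT.
    by move: h h3; clear; lia.
  - case: (ltngtP (v : nat) (g o1)) => [h2|h2|h2] /=.
    + by rewrite /= ?andbT ?orbF.
    + rewrite /= ?andbF ?orbT; apply/esym; apply/negP => /negP; rewrite -leqNgt => po.
      case: (eqVneq p o1) => [pe|pe]; first by move: h2; rewrite ev pe ltnn.
      have po' : (p < o1)%N by move: po pe; rewrite -val_eqE /=; clear; lia.
      have := mono p o1 po'; rewrite leqnn /= -ev => /(_ isT).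
      by move: h2; clear; lia.
    + rewrite /= ?andbF ?ltnn; have -> : p = o1 by apply: (@perm_inj _ g); rewrite -ev; apply: val_inj.
      by rewrite ltnn.
apply: eqTx => v w vw; rewrite gam_T // !AB /Tx.
have nvw : g^-1 v != g^-1 w.
  by rewrite (inj_eq (@perm_inj _ _)) -val_eqE /=; move: vw; clear; lia.
case: (ltnP o1 (g^-1 v)) => hp; case: (ltnP o1 (g^-1 w)) => hq /=.
- apply/negP => qp; have := mono _ _ qp; rewrite hq orbT !permKV => /(_ isT).
  by move: vw; clear; lia.
- by move: hp hq; clear; lia.
- by apply/negP; move: hp hq; clear; lia.
- apply/negP => qp; have := mono _ _ qp; rewrite hp !permKV => /(_ isT).
  by move: vw; clear; lia.
Qed.


Lemma main_unique (up : nat -> bool) (a b : 'I_n) : (a < b)%N -> forall g : 'S_n,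
  [/\ join_irr g, ~ contracts (Theta up) g & assoc_left_reflection g (tperm a b)] ->
  g = gam a b (fun r => up r.+1).
Proof.
move=> ab g [JI NC [i [rd E]]].
have [o1 [o2 [eo sg gd cE]]] := rd_desc rd.
have E2 : tperm a b = tperm (g o1) (g o2).
  by rewrite E cE /Defs.comp -tpermJ.
have nab : a != b by rewrite -val_eqE /=; move: ab; clear; lia.
have [ea eb] : a = g o2 /\ b = g o1.
  case: (tperm_eq nab E2) => [[ea eb]|//].
  by move: ab gd; rewrite ea eb; clear; lia.
have Hnd := join_irr_nodesc eo gd JI.
have gE := g_is_gam eo gd Hnd.
rewrite -ea -eb in gE.
have Hc : forall c, (a < c < b)%N -> Sg g o1 c = up c.+1.
  move=> c hc; case: (eqVneq (Sg g o1 c) (up c.+1)) => // ne; exfalso; apply: NC.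
  exists (gams a b (Sg g o1)); split.
    by rewrite {1}gE; apply: gam_cov.
  rewrite {1}gE; apply: Theta_contr; [done | exact: ltn_ord | by exists c; split].
rewrite {1}gE; apply: eqTx => v w vw; rewrite !gam_T // !AsetE.
have hv : (a < v < b)%N -> Sg g o1 v = up (v : nat).+1 by exact: Hc.
have hw : (a < w < b)%N -> Sg g o1 w = up (w : nat).+1 by exact: Hc.
case: (boolP (a < v < b)%N) => [/hv -> | _]; case: (boolP (a < w < b)%N) => [/hw -> | _] //=;
  rewrite ?andbF ?andbT //.
Qed.

End Main.

Theorem proposition6p7 (n : nat) (up : nat -> bool) (a b : 'I_n) :
  (a < b)%N ->
  let P := fun g : 'S_n =>
    [/\ join_irr g, ~ contracts (Theta up) g & assoc_left_reflection g (tperm a b)] in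
  (exists! g : 'S_n, P g) /\
  (forall g : 'S_n, P g ->
     lists_compl_then
       [set k : 'I_n | [|| k == a, ((a < k)%N && (k < b)%N && up k.+1) | (b < k)%N]] g).
Proof.
move=> ab P.
pose S0 := fun r : nat => up r.+1.
have HA : forall k : 'I_n,
    (k \in [set k : 'I_n | [|| k == a, ((a < k)%N && (k < b)%N && up k.+1) | (b < k)%N]])
    = Aset a b S0 k.
  move=> k; rewrite inE AsetE /S0 -orbA.
  by [].
have NC : ~ contracts (Theta up) (gam n a b S0).
  move=> [z [cov Th]]; have R := Theta_Rc Th.
  have [H1 _] := R a b ab.
  have J1 : Jx (gam n a b S0) (fun r => up r.+1) a b.
    by apply/(Jg_gam _ _ ab); exact: weak_le_refl.
  have gz : weak_le (gam n a b S0) z by apply/(Jg_gam _ _ ab); exact: H1.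
  case/andP: cov => /andP [nzg zg] _.
  by move: nzg; rewrite (weak_le_antisym zg gz) eqxx.
have Pg : P (gam n a b S0).
  by split; [exact: gam_join_irr | exact: NC | exact: gam_assoc].
split.
- exists (gam n a b S0); split => // g' Pg'.
  exact/esym/(main_unique ab Pg').
- move=> g Pg'; rewrite (main_unique ab Pg'); exact: gam_lists.
Qed.
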